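(* Let $n\ge 1$ and $k\ge 1$ be integers, let $A=(a_{pq})$ be a real $n\times n$ matrix, and let $j\in\{1,\dots,n\}$ be such that $a_{1j}<0$. Suppose $\lambda>0$ is a simple eigenvalue of $A$ and $A\mathbf u=\lambda\mathbf u$, $\mathbf v^TA=\lambda\mathbf v^T$ for some entrywise positive vectors $\mathbf u,\mathbf v\in\mathbb R^n$. Define the real $(k+n)\times(k+n)$ matrix $B=(b_{pq})$ by $$b_{pq}=\begin{cases} \lambda-a_{1j},&\text{if }p=q\in\{1,\dots,k\};\\ a_{1j},&\text{if }(p,q)\in\{(k,k+j),(k+1,1)\}\cup\{(1,2),(2,3),\dots,(k-1,k)\};\\ a_{p-k,q-k},&\text{if }p,q\in\{k+1,\dots,k+n\}\text{ and }(p,q)\neq(k+1,k+j);\\ 0,&\text{otherwise}. \end{cases}$$ Then $\lambda$ is a simple eigenvalue of $B$, and $B\mathbf w=\lambda\mathbf w$, $\mathbf z^TB=\lambda\mathbf z^T$, where $w_i=u_j$ and $z_i=v_1$ for $1\le i\le k$, and $w_i=u_{i-k}$, $z_i=v_{i-k}$ for $k+1\le i\le k+n$. Consequently, $B$ is algebraically positive.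
   Context: A real square matrix $M$ is algebraically positive if there is a real polynomial $f$ such that every entry of $f(M)$ is positive. A simple eigenvalue is one of algebraic multiplicity one. *)

(* Defs.v *)
From HB Require Import structures.
From mathcomp Require Import all_boot all_order all_algebra.
From mathcomp Require Import reals.
Set Implicit Arguments. Unset Strict Implicit. Unset Printing Implicit Defensive.
Import Order.TTheory GRing.Theory Num.Theory.
Local Open Scope ring_scope.

Definition simple_eigenvalue (R : fieldType) (m : nat) (M : 'M[R]_m) (lam : R) : Prop :=
  mup lam (char_poly M) = 1%N.

Definition alg_positive (R : realType) (m : nat) (M : 'M[R]_m.+1) : Prop :=
  exists f : {poly R}, forall i j, 0 < (horner_mx M f) i j.

(* The matrix B of the theorem, with 0-based indices:
   1-based row/col p corresponds to 0-based p-1; a_{1j} = A ord0 j. *)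
Definition Bmat (R : realType) (k n : nat) (A : 'M[R]_n.+1) (j : 'I_n.+1) (lam : R)
  : 'M[R]_(k + n.+1) :=
  \matrix_(p, q)
    let a := A ord0 j in
    if ((p : nat) == q) && (p < k)%N then lam - a
    else if [|| ((p : nat) == k.-1) && ((q : nat) == k + j)%N,
                ((p : nat) == k) && ((q : nat) == 0%N)
              | (p.+1 < k)%N && ((q : nat) == p.+1)] then a
    else if [&& (k <= p)%N, (k <= q)%N & ~~ (((p : nat) == k) && ((q : nat) == k + j)%N)]
    then A (inord (p - k)) (inord (q - k))
    else 0.

Definition ext_vec (R : realType) (k n : nat) (u : 'cV[R]_n.+1) (c : R)
  : 'cV[R]_(k + n.+1) :=
  \col_i (if (i < k)%N then c else u (inord (i - k)) 0).

(* Main.v *)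
Require Import Defs.
From HB Require Import structures.
From mathcomp Require Import all_boot all_order all_algebra.
From mathcomp Require Import zify ring lra.
From mathcomp Require Import reals.
Set Implicit Arguments. Unset Strict Implicit. Unset Printing Implicit Defensive.
Import Order.TTheory GRing.Theory Num.Theory.
Local Open Scope ring_scope.

Section Gen.
Variable F : fieldType.

Lemma rank_row'_le m p (i : 'I_m) (R : 'M[F]_(m, p)) : (\rank (row' i R) <= \rank R)%N.
Proof.
apply: mxrankS; apply/row_subP => k.
have -> : row k (row' i R) = row (lift i k) R by apply/rowP => l; rewrite !mxE.
exact: row_sub.
Qed.

Lemma adj0 m (D : 'M[F]_m.+1) : (\rank D < m)%N -> \adj D = 0.
Proof.
move=> hr; apply/matrixP => i j; rewrite !mxE /cofactor.
suff -> : \det (row' j (col' i D)) = 0 by rewrite mulr0.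
apply/eqP; apply: contraTT hr; rewrite -unitfE -unitmxE => /mxrank_unit /= hu.
rewrite -leqNgt -{1}hu. apply: (leq_trans (rank_row'_le j (col' i D))).
rewrite -mxrank_tr -(mxrank_tr D) (_ : (col' i D)^T = row' i D^T) ?rank_row'_le //.
by apply/matrixP => a b; rewrite !mxE.
Qed.

Lemma rank_row'_ge m p (R : 'M[F]_(m.+1, p)) (y : 'rV_m.+1) :
  y != 0 -> y *m R = 0 -> exists i, (\rank R <= \rank (row' i R))%N.
Proof.
move=> ny hy.
have [i hi] : exists i, y 0 i != 0.
  apply/existsP; apply: contraR ny; rewrite negb_exists => /forallP h.
  by apply/eqP/rowP => i; rewrite mxE; apply/eqP; have := h i; rewrite negbK.
exists i; apply: mxrankS; apply/row_subP => k.
have rl : forall k', row (lift i k') R = row k' (row' i R).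
  by move=> k'; apply/rowP => l; rewrite !mxE.
case: (unliftP i k) => [k' ->|->]; first by rewrite rl row_sub.
have e := hy; rewrite mulmx_sum_row (bigD1_ord i) //= in e.
have -> : row i R = - (y 0 i)^-1 *: \sum_(k' < m) y 0 (lift i k') *: row (lift i k') R.
  move/(congr1 (fun M => (y 0 i)^-1 *: M)): e; rewrite scaler0 scalerDr scalerA mulVf // scale1r.
  by move/eqP; rewrite addr_eq0 => /eqP ->; rewrite scaleNr.
rewrite scalemx_sub // summx_sub // => k' _; rewrite scalemx_sub // rl row_sub //.
Qed.


Lemma adjN0 m (D : 'M[F]_m.+1) (y : 'rV_m.+1) :
  y != 0 -> y *m D = 0 -> (m <= \rank D)%N -> \adj D != 0.
Proof.
move=> ny hy hr.
have [i hi] := rank_row'_ge ny hy.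
set R' := (row' i D)^T.
have hk : (0 < \rank (kermx R'))%N.
  by rewrite mxrank_ker subn_gt0 ltnS rank_leq_col.
have ny' : nz_row (kermx R') != 0.
  by rewrite nz_row_eq0 -mxrank_eq0 -lt0n.
have hy' : nz_row (kermx R') *m R' = 0 by apply/sub_kermxP; exact: nz_row_sub.
have [j hj] := rank_row'_ge ny' hy'.
have hS : row' j R' \in unitmx.
  rewrite -row_free_unit /row_free eqn_leq rank_leq_row /=.
  by rewrite (leq_trans _ hj) // /R' mxrank_tr (leq_trans hr hi).
apply/eqP => /matrixP /(_ j i); rewrite !mxE /cofactor => /eqP.
rewrite mulf_eq0 signr_eq0 /=; apply/negP.
rewrite unitmxE unitfE -det_tr in hS.
rewrite (_ : (row' j R')^T = row' i (col' j D)) // in hS.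
by apply/matrixP => a b; rewrite !mxE.
Qed.


Lemma ker1 N (D : 'M[F]_N) (v : 'rV_N) : v != 0 -> v *m D = 0 -> (N.-1 <= \rank D)%N ->
  forall x, x *m D = 0 -> exists c, x = c *: v.
Proof.
move=> nv hv hr x hx.
have vk : (v <= kermx D)%MS by apply/sub_kermxP.
have xk : (x <= kermx D)%MS by apply/sub_kermxP.
have h1 : \rank (kermx D) = 1%N.
  apply/eqP; rewrite eqn_leq; apply/andP; split.
    by rewrite mxrank_ker; move: hr (rank_leq_col D); lia.
  by have := mxrankS vk; rewrite rank_rV nv.
have e : (v == kermx D)%MS.
  by have := mxrank_leqif_eq vk; rewrite rank_rV nv h1 => -[_ <-].
apply/sub_rVP; exact: (submx_trans xk (proj2 (andP e))).
Qed.


Lemma kerrank N (D : 'M[F]_N) (v : 'rV_N) :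
  (forall x, x *m D = 0 -> exists c, x = c *: v) -> (N.-1 <= \rank D)%N.
Proof.
move=> h.
have sk : (kermx D <= v)%MS.
  apply/row_subP => k; have [|c ->] := h (row k (kermx D)).
    by rewrite -row_mul mulmx_ker row0.
  by rewrite scalemx_sub.
have := mxrankS sk; rewrite mxrank_ker => h1.
have := rank_leq_row v; lia.
Qed.

End Gen.

Section Poly.
Variable F : fieldType.
Variables (N : nat) (M : 'M[F]_N) (lam : F).
Local Notation ev := (map_mx (horner_eval lam)).
Local Notation P := (char_poly_mx M).
Local Notation t := ('X - lam%:P).
Local Notation D := (lam%:M - M).

Lemma evP : ev P = D.
Proof.
apply/matrixP => i j; rewrite !mxE /horner_eval.
by rewrite hornerD hornerN !hornerE; case: (i == j) => /=; rewrite ?mulr1n ?mulr0n ?hornerE.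
Qed.

Lemma evQ : ev (\adj P) = \adj D.
Proof. by rewrite map_mx_adj evP. Qed.

Lemma Pdec : P = t%:M + map_mx polyC D.
Proof.
apply/matrixP => i j; rewrite !mxE; case: (i == j) => /=; rewrite ?mulr1n ?mulr0n; 
  rewrite ?polyCB; ring.
Qed.

Lemma mxdec (Q : 'M[{poly F}]_N) :
  Q = map_mx polyC (ev Q) + t *: map_mx (fun q => (q - q.[lam]%:P) %/ t) Q.
Proof.
apply/matrixP => i j; rewrite !mxE /horner_eval.
rewrite mulrC divpK; first by rewrite addrC subrK.
by rewrite dvdp_XsubCl /root hornerD hornerN hornerC subrr.
Qed.

Lemma scale_cancel (X Y : 'M[{poly F}]_N) : t *: X = t *: Y -> X = Y.
Proof.
move=> /matrixP h; apply/matrixP => i j; have := h i j; rewrite !mxE.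
by apply: mulfI; rewrite polyXsubC_eq0.
Qed.

Lemma char_ev : (char_poly M).[lam] = \det D.
Proof. by rewrite -evP det_map_mx. Qed.


Lemma mup1_split : mup lam (char_poly M) = 1%N ->
  exists g, char_poly M = g * t /\ ~~ root g lam.
Proof.
move=> hm; have nz : char_poly M != 0 by rewrite monic_neq0 ?char_poly_monic.
have h1 : (t ^+ 1 %| char_poly M) by rewrite -mup_geq // hm.
rewrite expr1 in h1.
exists (char_poly M %/ t); split; first by rewrite divpK.
apply/negP => r; have : (t ^+ 2 %| char_poly M).
  rewrite -(divpK h1) expr2 dvdp_mul2r ?polyXsubC_eq0 //.
  by rewrite dvdp_XsubCl.
by rewrite -mup_geq // hm.
Qed.


End Poly.

Lemma simple_rank (F : fieldType) N (M : 'M[F]_N) lam :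
  mup lam (char_poly M) = 1%N -> (N.-1 <= \rank (lam%:M - M)%R)%N.
Proof.
move=> /mup1_split [g [hg ng]].
case: N M hg => [|m] M' hg; first by [].
set t := 'X - lam%:P.
rewrite leqNgt; apply/negP => /adj0 h0.
set Q := \adj (char_poly_mx M').
set Q1 := map_mx (fun q => (q - q.[lam]%:P) %/ t) Q.
have hQ : Q = t *: Q1 by rewrite {1}(mxdec lam Q) /Q evQ h0 map_mx0 add0r.
have e : char_poly_mx M' *m Q1 = g%:M.
  apply: (@scale_cancel _ _ lam); rewrite scalemxAr. rewrite -hQ /Q mul_mx_adj.
  by rewrite -/(char_poly M') hg scale_scalar_mx mulrC.
have := congr1 (map_mx (horner_eval lam)) e; rewrite map_mxM evP map_scalar_mx.
move/(congr1 determinant); rewrite det_mulmx det_scalar -char_ev.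
have : root (char_poly M') lam by rewrite hg rootM root_XsubC eqxx orbT.
move/eqP => ->; rewrite mul0r => /esym /eqP; rewrite expf_eq0 /= horner_evalE => /eqP.
by move: ng; rewrite /root => /eqP.
Qed.


Lemma colM (F : fieldType) m n p (A : 'M[F]_(m, n)) (B : 'M[F]_(n, p)) b :
  col b (A *m B) = A *m col b B.
Proof. by apply/matrixP => i j; rewrite !mxE; apply: eq_bigr => k _; rewrite !mxE. Qed.

Lemma eigD (F : fieldType) N (M : 'M[F]_N) (lam : F) (x : 'cV_N) :
  (lam%:M - M) *m x = 0 <-> M *m x = lam *: x.
Proof.
rewrite mulmxBl mul_scalar_mx; split; first by move/eqP; rewrite subr_eq0 => /eqP <-.
by move=> ->; rewrite subrr.
Qed.

Lemma rank_simple (F : fieldType) N (M : 'M[F]_N) (lam : F) (w z : 'cV_N) :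
  (forall x : 'cV_N, M *m x = lam *: x -> exists c, x = c *: w) ->
  M *m w = lam *: w -> z^T *m M = lam *: z^T -> (z^T *m w) 0 0 != 0 ->
  mup lam (char_poly M) = 1%N.
Proof.
case: N M w z => [|m] M w z hker hw hz hzw.
  by move: hzw; rewrite mxE big_ord0 eqxx.
set D := lam%:M - M.
have Dw : D *m w = 0 by apply/eigD.
have Dz : z^T *m D = 0 by rewrite mulmxBr mul_mx_scalar hz subrr.
have nw : w != 0 by apply: contraNneq hzw => ->; rewrite mulmx0 mxE.
have nz : z^T != 0 by apply: contraNneq hzw => ->; rewrite mul0mx mxE.
have nzc : char_poly M != 0 by rewrite monic_neq0 ?char_poly_monic.
have detD : \det D = 0.
  apply/eqP; apply: contraNT nw => hd.
  have hu : D \in unitmx by rewrite unitmxE unitfE.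
  by rewrite -(mulKmx hu w) Dw mulmx0.
set t := 'X - lam%:P.
apply/eqP; rewrite eqn_leq; apply/andP; split; last first.
  rewrite mup_geq // expr1 dvdp_XsubCl /root char_ev.
  by rewrite -/D detD.
rewrite -ltnS mup_ltn //; apply/negP => /dvdpP [h hh].
set Q := \adj (char_poly_mx M).
set Q0 := map_mx (horner_eval lam) Q.
set Q1 := map_mx (fun q => (q - q.[lam]%:P) %/ t) Q.
have hQ0 : Q0 = \adj D by rewrite /Q0 evQ.
have DQ0 : D *m Q0 = 0.
  by rewrite hQ0 mul_mx_adj detD; apply/matrixP => a b; rewrite !mxE mul0rn.
have hQ : Q = map_mx polyC Q0 + t *: Q1 := mxdec lam Q.
have e1 : char_poly_mx M *m Q = (char_poly M)%:M := mul_mx_adj _.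
have e2 : t *: (map_mx polyC Q0 + t *: Q1 + map_mx polyC D *m Q1) = t *: (h * t)%:M.
  rewrite scale_scalar_mx.
  have -> : t * (h * t) = char_poly M by rewrite hh expr2 mulrCA.
  rewrite -e1 hQ (Pdec M lam).
  rewrite mulmxDl !mulmxDr !mul_scalar_mx -map_mxM DQ0 map_mx0 add0r -scalemxAr.
  by rewrite !scalerDr.
have e3 := scale_cancel e2.
have evC : forall X : 'M[F]_m.+1, map_mx (horner_eval lam) (map_mx polyC X) = X.
  by move=> X; apply/matrixP => a b; rewrite !mxE /horner_eval hornerC.
have evt : forall X : 'M[{poly F}]_m.+1, map_mx (horner_eval lam) (t *: X) = 0.
  move=> X; apply/matrixP => a b; rewrite !mxE /horner_eval hornerM.
  by rewrite /t hornerXsubC subrr mul0r.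
have e5 : Q0 + D *m map_mx (horner_eval lam) Q1 = 0.
  have := congr1 (map_mx (horner_eval lam)) e3.
  rewrite mulrC -scale_scalar_mx evt map_mxD map_mxD map_mxM !evC evt addr0.
  done.
have zQ0 : z^T *m Q0 = 0.
  by move/(congr1 (mulmx z^T)): e5; rewrite mulmxDr mulmxA Dz mul0mx addr0 mulmx0.
have Q00 : Q0 = 0.
  apply/matrixP => a b; rewrite mxE.
  have hc : M *m col b Q0 = lam *: col b Q0.
    by apply/eigD; rewrite -/D -colM DQ0; apply/matrixP => x y; rewrite !mxE.
  have [c hc'] := hker _ hc.
  have : (z^T *m col b Q0) 0 0 = 0 by rewrite -colM zQ0 !mxE.
  rewrite hc' -scalemxAr mxE => /eqP; rewrite mulf_eq0 (negbTE hzw) orbF => /eqP c0.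
  by move/matrixP: hc' => /(_ a 0); rewrite !mxE c0 mul0r.
have : \adj D != 0.
  apply: (adjN0 nz Dz).
  rewrite -mxrank_tr; apply: (kerrank (v := w^T)) => x hx.
  have [|c hc] := hker x^T.
    apply/eigD; rewrite -/D; apply: trmx_inj; rewrite trmx_mul trmxK hx; apply/matrixP => a b; rewrite !mxE.
    done.
  by exists c; rewrite -[x]trmxK hc linearZ.
by rewrite -hQ0 Q00 eqxx.
Qed.

Lemma simple_ker (F : fieldType) N (M : 'M[F]_N) (lam : F) (w : 'cV_N) :
  mup lam (char_poly M) = 1%N -> w != 0 -> M *m w = lam *: w ->
  forall x, M *m x = lam *: x -> exists c, x = c *: w.
Proof.
move=> hm nw hw x hx.
have hr := simple_rank hm.
have h1 : w^T != 0.
  by apply: contraNneq nw => /(congr1 trmx); rewrite trmxK linear0 => ->.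
have h2 : w^T *m (lam%:M - M)^T = 0.
  by rewrite -trmx_mul; move/eigD: hw => ->; rewrite linear0.
have h3 : (N.-1 <= \rank (lam%:M - M)^T)%N by rewrite mxrank_tr.
have h4 : x^T *m (lam%:M - M)^T = 0.
  by rewrite -trmx_mul; move/eigD: hx => ->; rewrite linear0.
have [c hc] := ker1 h1 h2 h3 h4.
by exists c; rewrite -[x]trmxK hc linearZ /= trmxK.
Qed.

Lemma simple_kerL (F : fieldType) N (M : 'M[F]_N) (lam : F) (z : 'cV_N) :
  mup lam (char_poly M) = 1%N -> z != 0 -> z^T *m M = lam *: z^T ->
  forall x : 'cV_N, x^T *m M = lam *: x^T -> exists c, x = c *: z.
Proof.
move=> hm nz hz x hx.
have hr := simple_rank hm.
have Dz : forall y : 'rV_N, y *m M = lam *: y -> y *m (lam%:M - M) = 0.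
  by move=> y hy; rewrite mulmxBr mul_mx_scalar hy subrr.
have [|c hc] := @ker1 F N (lam%:M - M) z^T _ (Dz _ hz) hr x^T (Dz _ hx).
  by apply: contraNneq nz => /(congr1 trmx); rewrite trmxK linear0 => ->.
by exists c; rewrite -[x]trmxK hc linearZ /= trmxK.
Qed.

Lemma horner_mx_eig (F : fieldType) m (M : 'M[F]_m.+1) (lam : F) (w : 'cV_m.+1) p :
  M *m w = lam *: w -> horner_mx M p *m w = p.[lam] *: w.
Proof.
move=> hw; elim/poly_ind: p => [|p c IH].
  by rewrite rmorph0 mul0mx horner0 scale0r.
rewrite rmorphD rmorphM /= horner_mx_X horner_mx_C mulmxDl -mulmxE -mulmxA hw.
by rewrite -scalemxAr IH scalerA mul_scalar_mx -scalerDl hornerMXaddC mulrC.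
Qed.

Lemma simple_algpos (R : realType) m (M : 'M[R]_m.+1) (lam : R) (w z : 'cV_m.+1) :
  mup lam (char_poly M) = 1%N -> M *m w = lam *: w -> z^T *m M = lam *: z^T ->
  (forall i, 0 < w i 0) -> (forall i, 0 < z i 0) -> alg_positive M.
Proof.
move=> hm hw hz wp zp.
have nw : w != 0.
  by apply/eqP => /matrixP /(_ ord0 0); rewrite mxE => e; have := wp ord0; rewrite e ltxx.
have nz : z != 0.
  by apply/eqP => /matrixP /(_ ord0 0); rewrite mxE => e; have := zp ord0; rewrite e ltxx.
have [g [hg ng]] := mup1_split hm.
set G := horner_mx M g.
have CH : horner_mx M (char_poly M) = 0 by exact: Cayley_Hamilton.
have hcol : forall b, M *m col b G = lam *: col b G.
  move=> b; apply/eigD; rewrite -colM.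
  suff -> : (lam%:M - M) *m G = 0 by apply/matrixP => x y; rewrite !mxE.
  move: CH; rewrite hg mulrC rmorphM /= rmorphB /= horner_mx_X horner_mx_C => e.
  by rewrite -opprB mulNmx mulmxE e oppr0.
have hrow : forall a, (row a G)^T^T *m M = lam *: (row a G)^T^T.
  move=> a; rewrite trmxK; apply/eqP; rewrite -subr_eq0 -mul_mx_scalar -mulmxBr -row_mul.
  suff -> : G *m (M - lam%:M) = 0 by rewrite row0.
  by move: CH; rewrite hg rmorphM /= rmorphB /= horner_mx_X horner_mx_C mulmxE => ->.
have [d hd] := simple_kerL hm nz hz (hrow ord0).
have hG : forall a b, G a b = (d / w ord0 0) * (w a 0 * z b 0).
  move=> a b; have [c hc] := simple_ker hm nw hw (hcol b).
  have e1 : G a b = c * w a 0 by move/matrixP: hc => /(_ a 0); rewrite !mxE.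
  have e2 : G ord0 b = c * w ord0 0 by move/matrixP: hc => /(_ ord0 0); rewrite !mxE.
  have e3 : G ord0 b = d * z b 0 by move/matrixP: hd => /(_ b 0); rewrite !mxE.
  have w0 : w ord0 0 != 0 by rewrite gt_eqF // wp.
  rewrite e1; have -> : c = d * z b 0 / w ord0 0 by rewrite -e3 e2 mulfK.
  by field.
set kap := d / w ord0 0.
have nk : kap != 0.
  apply/eqP => k0; have := horner_mx_eig g hw; rewrite -/G.
  have -> : G = 0 by apply/matrixP => a b; rewrite hG -/kap k0 mul0r mxE.
  rewrite mul0mx => /esym /eqP; rewrite scaler_eq0 (negbTE nw) orbF.
  by move: ng; rewrite /root => /negbTE ->.
exists (kap^-1 *: g) => a b.
rewrite linearZ /= -/G mxE hG -/kap mulrA mulVf // mul1r.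
by apply: mulr_gt0.
Qed.

Section BM.
Variables (R : realType) (n k : nat) (A : 'M[R]_n.+1) (j : 'I_n.+1) (lam : R).
Local Notation B := (Bmat k.+1 A j lam).
Local Notation a := (A ord0 j).

Lemma B11 (p q : 'I_k.+1) : B (lshift n.+1 p) (lshift n.+1 q) =
  if (p : nat) == q then lam - a else if (p.+1 == q)%N then a else 0.
Proof.
have := ltn_ord p; have := ltn_ord q.
rewrite mxE /=; do ! case: ifP => //; move=> *; exfalso; lia.
Qed.

Lemma B12 (p : 'I_k.+1) (q : 'I_n.+1) : B (lshift n.+1 p) (rshift k.+1 q) =
  if ((p : nat) == k) && ((q : nat) == j) then a else 0.
Proof.
have := ltn_ord p; have := ltn_ord q.
rewrite mxE /=; do ! case: ifP => //; move=> *; exfalso; lia.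
Qed.

Lemma B21 (p : 'I_n.+1) (q : 'I_k.+1) : B (rshift k.+1 p) (lshift n.+1 q) =
  if ((p : nat) == 0%N) && ((q : nat) == 0%N) then a else 0.
Proof.
have := ltn_ord p; have := ltn_ord q.
rewrite mxE /=; do ! case: ifP => //; move=> *; exfalso; lia.
Qed.

Lemma B22 (p q : 'I_n.+1) : B (rshift k.+1 p) (rshift k.+1 q) =
  if ((p : nat) == 0%N) && ((q : nat) == j) then 0 else A p q.
Proof.
have := ltn_ord p; have := ltn_ord q.
rewrite mxE /= !addKn !inord_val; do ! case: ifP => //; move=> *; exfalso; lia.
Qed.


Lemma sum_if_eq K (m : nat) (x : R) :
  \sum_(q < K) (if (q : nat) == m then x else 0) = if (m < K)%N then x else 0.
Proof.
case: ifP => hm.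
  rewrite (bigD1 (Ordinal hm)) //= eqxx big1 ?addr0 // => q hq.
  by case: eqP => // e; move: hq; rewrite -val_eqE /= e eqxx.
by rewrite big1 // => q _; case: eqP => // e; move: (ltn_ord q); rewrite e hm.
Qed.

Lemma ext_l (c : R) (u : 'cV[R]_n.+1) (p : 'I_k.+1) :
  ext_vec k.+1 u c (lshift n.+1 p) 0 = c.
Proof. by rewrite mxE /= ltn_ord. Qed.

Lemma ext_r (c : R) (u : 'cV[R]_n.+1) (p : 'I_n.+1) :
  ext_vec k.+1 u c (rshift k.+1 p) 0 = u p 0.
Proof. by rewrite mxE /= ltnNge leq_addr /= addKn inord_val. Qed.

Lemma Bw (u : 'cV[R]_n.+1) : A *m u = lam *: u ->
  B *m ext_vec k.+1 u (u j 0) = lam *: ext_vec k.+1 u (u j 0).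
Proof.
move=> hu; apply/matrixP => p l; rewrite (ord1 l) -(splitK p).
rewrite [LHS]mxE [RHS]mxE big_split_ord /=.
case: (split p) => p' /=.
- rewrite ext_l.
  have e1 : forall q : 'I_k.+1, B (lshift n.+1 p') (lshift n.+1 q) * ext_vec k.+1 u (u j 0) (lshift n.+1 q) 0
     = (if (q : nat) == p' then (lam - a) * u j 0 else 0) + (if (q : nat) == p'.+1 then a * u j 0 else 0).
    move=> q; rewrite B11 ext_l; have := ltn_ord p'; have := ltn_ord q.
    by do ! case: ifP => //; move=> *; rewrite ?add0r ?addr0 ?mul0r //; exfalso; lia.
  have e2 : forall q : 'I_n.+1, B (lshift n.+1 p') (rshift k.+1 q) * ext_vec k.+1 u (u j 0) (rshift k.+1 q) 0
     = if (q : nat) == j then (if (p' : nat) == k then a * u j 0 else 0) else 0.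
    move=> q; rewrite B12 ext_r; case: eqP => e; case: eqP => e' /=; rewrite ?mul0r //.
    by rewrite (_ : q = j) //; apply: val_inj.
  rewrite (eq_bigr _ (fun q _ => e1 q)) big_split /= !sum_if_eq.
  rewrite (eq_bigr _ (fun q _ => e2 q)) sum_if_eq (ltn_ord j) (ltn_ord p').
  have := ltn_ord p'; case: (eqVneq (p' : nat) k) => [->|ne] hp.
    rewrite ltnn; ring.
  have -> : (p'.+1 < k.+1)%N by lia.
  ring.
- rewrite ext_r.
  have e1 : forall q : 'I_k.+1, B (rshift k.+1 p') (lshift n.+1 q) * ext_vec k.+1 u (u j 0) (lshift n.+1 q) 0
     = if (q : nat) == 0%N then (if (p' : nat) == 0%N then a * u j 0 else 0) else 0.
    by move=> q; rewrite B21 ext_l; case: eqP => e; case: eqP => e' /=; rewrite ?mul0r.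
  have e2 : forall q : 'I_n.+1, B (rshift k.+1 p') (rshift k.+1 q) * ext_vec k.+1 u (u j 0) (rshift k.+1 q) 0
     = A p' q * u q 0 - if (q : nat) == j then (if (p' : nat) == 0%N then a * u j 0 else 0) else 0.
    move=> q; rewrite B22 ext_r; case: eqP => e; case: eqP => e' /=; rewrite ?subr0 ?mul0r //.
    have -> : q = j by apply: val_inj.
    have -> : p' = ord0 by apply: val_inj.
    by rewrite subrr.
  rewrite (eq_bigr _ (fun q _ => e1 q)) sum_if_eq /=.
  rewrite (eq_bigr _ (fun q _ => e2 q)) sumrB sum_if_eq (ltn_ord j).
  move/matrixP: hu => /(_ p' 0); rewrite !mxE => ->.
  by rewrite addrC subrK.
Qed.


Lemma zB (v : 'cV[R]_n.+1) : v^T *m A = lam *: v^T ->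
  (ext_vec k.+1 v (v ord0 0))^T *m B = lam *: (ext_vec k.+1 v (v ord0 0))^T.
Proof.
move=> hv; apply/matrixP => l q; rewrite (ord1 l) -(splitK q).
rewrite [LHS]mxE [RHS]mxE [X in _ = _ * X]mxE big_split_ord /=.
case: (split q) => q' /=.
- rewrite ext_l.
  have e1 : forall p : 'I_k.+1, (ext_vec k.+1 v (v ord0 0))^T 0 (lshift n.+1 p) * B (lshift n.+1 p) (lshift n.+1 q')
     = (if (p : nat) == q' then (lam - a) * v ord0 0 else 0) + (if (p : nat) == q'.-1 then (if (0 < q')%N then a * v ord0 0 else 0) else 0).
    move=> p; rewrite mxE B11 ext_l mulrC; have := ltn_ord p; have := ltn_ord q'.
    by do ! case: ifP => //; move=> *; rewrite ?add0r ?addr0 ?mul0r ?mulr0 //; exfalso; lia.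
  have e2 : forall p : 'I_n.+1, (ext_vec k.+1 v (v ord0 0))^T 0 (rshift k.+1 p) * B (rshift k.+1 p) (lshift n.+1 q')
     = if (p : nat) == 0%N then (if (q' : nat) == 0%N then a * v ord0 0 else 0) else 0.
    move=> p; rewrite mxE B21 ext_r; case: eqP => e; case: eqP => e' /=; rewrite ?mulr0 //.
    by rewrite (_ : p = ord0); [exact: mulrC | apply: val_inj].
  rewrite (eq_bigr _ (fun p _ => e1 p)) big_split /= !sum_if_eq.
  rewrite (eq_bigr _ (fun p _ => e2 p)) sum_if_eq /=.
  have := ltn_ord q'; rewrite (ltn_ord q').
  have -> : (q'.-1 < k.+1)%N by have := ltn_ord q'; lia.
  move=> _; case E: (0 < q')%N; case E2: ((q' : nat) == 0%N) => /=; try (exfalso; lia); ring.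
- rewrite ext_r.
  have e1 : forall p : 'I_k.+1, (ext_vec k.+1 v (v ord0 0))^T 0 (lshift n.+1 p) * B (lshift n.+1 p) (rshift k.+1 q')
     = if (p : nat) == k then (if (q' : nat) == j then a * v ord0 0 else 0) else 0.
    by move=> p; rewrite mxE B12 ext_l; case: eqP => e; case: eqP => e' /=; rewrite ?mulr0 // mulrC.
  have e2 : forall p : 'I_n.+1, (ext_vec k.+1 v (v ord0 0))^T 0 (rshift k.+1 p) * B (rshift k.+1 p) (rshift k.+1 q')
     = v p 0 * A p q' - if (p : nat) == 0%N then (if (q' : nat) == j then a * v ord0 0 else 0) else 0.
    move=> p; rewrite mxE B22 ext_r; case: eqP => e; case: eqP => e' /=; rewrite ?subr0 ?mulr0 //.
    have -> : q' = j by apply: val_inj.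
    have -> : p = ord0 by apply: val_inj.
    by rewrite mulrC subrr.
  rewrite (eq_bigr _ (fun p _ => e1 p)) sum_if_eq ltnSn.
  rewrite (eq_bigr _ (fun p _ => e2 p)) sumrB sum_if_eq /=.
  move/matrixP: hv => /(_ 0 q'); rewrite !mxE => <-.
  rewrite addrC subrK; apply: eq_bigr => p _; rewrite mxE //.
Qed.


Lemma sum_if_eq_f K (m : nat) (f : nat -> R) :
  \sum_(q < K) (if (q : nat) == m then f q else 0) = if (m < K)%N then f m else 0.
Proof.
rewrite -sum_if_eq; apply: eq_bigr => q _; by case: eqP => // ->.
Qed.

Lemma Bker (u : 'cV[R]_n.+1) :
  (forall y, A *m y = lam *: y -> exists c, y = c *: u) -> a != 0 ->
  forall x, B *m x = lam *: x -> exists c, x = c *: ext_vec k.+1 u (u j 0).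
Proof.
move=> hkA na x hx.
pose xl (i : nat) := x (lshift n.+1 (inord i)) 0.
pose y := \col_i x (rshift k.+1 i) 0.
have xlE : forall q : 'I_k.+1, x (lshift n.+1 q) 0 = xl q by move=> q; rewrite /xl inord_val.
have rl : forall p : 'I_k.+1, (lam - a) * xl p + (if (p.+1 < k.+1)%N then a * xl p.+1 else 0)
    + (if (p : nat) == k then a * y j 0 else 0) = lam * xl p.
  move=> p; move/matrixP: hx => /(_ (lshift n.+1 p) 0); rewrite !mxE big_split_ord /= xlE => <-.
  have e1 : forall q : 'I_k.+1, B (lshift n.+1 p) (lshift n.+1 q) * x (lshift n.+1 q) 0 =
     (if (q : nat) == p then (lam - a) * xl q else 0) + (if (q : nat) == p.+1 then a * xl q else 0).
    move=> q; rewrite B11 xlE; have := ltn_ord p; have := ltn_ord q.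
    by do ! case: ifP => //; move=> *; rewrite ?add0r ?addr0 ?mul0r //; exfalso; lia.
  have e2 : forall q : 'I_n.+1, B (lshift n.+1 p) (rshift k.+1 q) * x (rshift k.+1 q) 0 =
     if (q : nat) == j then (if (p : nat) == k then a * y j 0 else 0) else 0.
    move=> q; rewrite B12 mxE; case: eqP => e; case: eqP => e' /=; rewrite ?mul0r //.
    by rewrite (_ : q = j) //; apply: val_inj.
  rewrite (eq_bigr _ (fun q _ => e1 q)) big_split /=.
  rewrite (sum_if_eq_f _ _ (fun i => (lam - a) * xl i)) (sum_if_eq_f _ _ (fun i => a * xl i)).
  by rewrite (eq_bigr _ (fun q _ => e2 q)) sum_if_eq (ltn_ord j) (ltn_ord p) mxE.
have K1 : forall i, (i < k)%N -> xl i.+1 = xl i.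
  move=> i hi; have := rl (inord i); rewrite inordK; last by lia.
  have -> : (i.+1 < k.+1)%N by lia.
  have -> : (i == k) = false by lia.
  rewrite addr0 => /eqP; rewrite -subr_eq0 => /eqP h.
  have : a * (xl i.+1 - xl i) = 0 by rewrite -h; ring.
  by move/eqP; rewrite mulf_eq0 (negbTE na) /= subr_eq0 => /eqP.
have K2 : y j 0 = xl k.
  have := rl ord_max; rewrite /= ltnn eqxx addr0 => /eqP; rewrite -subr_eq0 => /eqP h.
  have : a * (y j 0 - xl k) = 0 by rewrite -h; ring.
  by move/eqP; rewrite mulf_eq0 (negbTE na) /= subr_eq0 => /eqP.
have K0 : forall i, (i <= k)%N -> xl i = xl 0.
  elim=> [//|i IH] hi; rewrite K1 ?IH //; lia.
have hy : A *m y = lam *: y.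
  apply/matrixP => p l; rewrite (ord1 l).
  move/matrixP: hx => /(_ (rshift k.+1 p) 0); rewrite !mxE big_split_ord /=.
  have e1 : forall q : 'I_k.+1, B (rshift k.+1 p) (lshift n.+1 q) * x (lshift n.+1 q) 0 =
     if (q : nat) == 0%N then (if (p : nat) == 0%N then a * xl 0 else 0) else 0.
    move=> q; rewrite B21 xlE; case: eqP => e; case: eqP => e' /=; rewrite ?mul0r //.
    by rewrite ?e ?e'.
  have e2 : forall q : 'I_n.+1, B (rshift k.+1 p) (rshift k.+1 q) * x (rshift k.+1 q) 0 =
     A p q * y q 0 - if (q : nat) == j then (if (p : nat) == 0%N then a * y j 0 else 0) else 0.
    move=> q; rewrite B22 mxE; case: eqP => e; case: eqP => e' /=; rewrite ?subr0 ?mul0r //.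
    have -> : q = j by apply: val_inj.
    have -> : p = ord0 by apply: val_inj.
    by rewrite mxE subrr.
  rewrite (eq_bigr _ (fun q _ => e1 q)) sum_if_eq /=.
  rewrite (eq_bigr _ (fun q _ => e2 q)) sumrB sum_if_eq (ltn_ord j).
  rewrite K2 -(K0 k) // addrC subrK => <-; apply: eq_bigr => q _; rewrite mxE //.
have [c hc] := hkA y hy.
exists c; apply/matrixP => p l; rewrite (ord1 l) -(splitK p).
case: (split p) => p' /=; rewrite [RHS]mxE.
- rewrite ext_l xlE K0 -?(K0 k) // -?K2 ?hc ?mxE //; last by have := ltn_ord p'; lia.
- rewrite ext_r; move/matrixP: hc => /(_ p' 0); rewrite !mxE => <- //.
Qed.

End BM.

Unset Implicit Arguments.

Theorem theorem2p2 (R : realType) (n k : nat) (A : 'M[R]_n.+1) (j : 'I_n.+1)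
  (lam : R) (u v : 'cV[R]_n.+1) :
  A ord0 j < 0 ->
  0 < lam ->
  simple_eigenvalue A lam ->
  A *m u = lam *: u ->
  v^T *m A = lam *: v^T ->
  (forall i, 0 < u i 0) ->
  (forall i, 0 < v i 0) ->
  let B := Bmat k.+1 A j lam in
  let w := ext_vec k.+1 u (u j 0) in
  let z := ext_vec k.+1 v (v ord0 0) in
  [/\ simple_eigenvalue B lam,
      B *m w = lam *: w,
      z^T *m B = lam *: z^T
    & alg_positive B].
Proof.
move=> ha hlam hsA hu hv up vp B w z.
have nu : u != 0.
  by apply/eqP => /matrixP /(_ ord0 0); rewrite mxE => e; have := up ord0; rewrite e ltxx.
have hkA := simple_ker hsA nu hu.
have na : A ord0 j != 0 by rewrite ltr0_neq0.
have hB : B *m w = lam *: w by apply: Bw.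
have hz : z^T *m B = lam *: z^T by apply: zB.
have hkB : forall x, B *m x = lam *: x -> exists c, x = c *: w by apply: Bker.
have wp : forall i, 0 < w i 0 by move=> i; rewrite mxE; case: ifP => _; apply: up.
have zp : forall i, 0 < z i 0 by move=> i; rewrite mxE; case: ifP => _; apply: vp.
have hzw : (z^T *m w) 0 0 != 0.
  rewrite mxE (bigD1 (lshift n.+1 ord0)) //= mxE.
  have h1 := mulr_gt0 (zp (lshift n.+1 ord0)) (wp (lshift n.+1 ord0)).
  have h2 : 0 <= \sum_(i | i != lshift n.+1 ord0) z^T 0 i * w i 0.
    by apply: sumr_ge0 => i _; rewrite mxE; apply: mulr_ge0; apply: ltW.
  by apply/eqP; lra.
have hsB : simple_eigenvalue B lam := rank_simple hkB hB hz hzw.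
split => //; exact: simple_algpos hsB hB hz wp zp.
Qed.
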